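(* Let $2\le m\le n$ be natural numbers with $n-m=k(m-1)$ for a natural number $k$, and let $l$ be a positive integer with $l\equiv m\pmod{m-1}$. Let $P\subset a_{m-1}\{a_0,\dots,a_{m-1}\}^*$ be an $l$-element set such that $\{w: a_{m-1}w\in P\}$ is a complete prefix code over the alphabet $\{a_0,\dots,a_{m-1}\}$, with its elements listed as $p_l<_{dict}p_{l-1}<_{dict}\dots<_{dict}p_1$, and let $1\le i\le l$. Then the successors $(p_i)'_1,\dots,(p_i)'_k$ (with respect to $P$) are well defined. Moreover, letting $\widetilde{P}=(P\setminus\{p_i\})\cup\{p_ia_0,\dots,p_ia_{m-1}\}$, the successors with respect to $\widetilde{P}$ of the new elements are: for $1\le j\le m-1$ and $1\le r\le k$, $$(p_ia_j)'_r=p_i\,a_{m+(m-1-j)k+r-1},$$ (so $(p_ia_{m-1})'_1=p_ia_m,\dots,(p_ia_{m-1})'_k=p_ia_{m+k-1}$, $(p_ia_{m-2})'_1=p_ia_{m+k}$, ..., $(p_ia_1)'_k=p_ia_{n-1}$), and for $1\le r\le k$, $$(p_ia_0)'_r=(p_i)'_r,$$ where the right-hand side is the $r$-th successor of $p_i$ with respect to $P$.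
   Context: Let $\mathcal{A}_n=\{a_0,a_1,\dots,a_{n-1}\}$ be an alphabet of $n$ distinct letters with linear order $a_0<a_1<\dots<a_{n-1}$, containing $\mathcal{A}_m=\{a_0,\dots,a_{m-1}\}$, and let $\mathcal{A}_{m,n}=\{a_m,\dots,a_{n-1}\}$. Words are finite strings of letters (including the empty word $\varepsilon$), and juxtaposition denotes concatenation. $u<_{pref}v$ means $v=uw$ for a nonempty word $w$. Dictionary order: $u\le_{dict}v$ iff $u$ is a prefix of $v$, or $u=p\alpha s$, $v=p\beta t$ with letters $\alpha<\beta$. For a finite set $P$ of words, $\operatorname{spref}(P)=\{w: \exists p\in P,\ w<_{pref}p\}$ (strict prefixes, including $\varepsilon$), and $\operatorname{spref}(P)\mathcal{A}_{m,n}=\{xa_j: x\in\operatorname{spref}(P),\ a_j\in\mathcal{A}_{m,n}\}$. Successors: let $P\subset a_{m-1}\{a_0,\dots,a_{m-1}\}^*$ be as in the claim, with elements $p_1,\dots,p_l$ listed in reverse dictionary order ($p_1$ the largest). The successors $(p_s)'_r$ ($1\le s\le l$, $1\le r\le k$) are defined inductively in the order $(p_1)'_1,\dots,(p_1)'_k,(p_2)'_1,\dots,(p_2)'_k,\dots,(p_l)'_k$: writing $P_{s,r-1}$ for the set of all successors already defined before $(p_s)'_r$ in this order, $$(p_s)'_r=\min{}_{\le_{dict}}\{xa_j\in\operatorname{spref}(P)\mathcal{A}_{m,n}:\ p_s<_{dict}xa_j,\ xa_j\notin P_{s,r-1}\}.$$ ''Well defined'' means the set over which the minimum is taken is nonempty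 at each step. Successors with respect to $\widetilde{P}$ are defined the same way with $\widetilde{P}$ (listed in its own reverse dictionary order) in place of $P$. *)

(* Defs.v *)
(* Words over the alphabet {a_0,...,a_{n-1}} are encoded as
   sequences of natural numbers: the letter a_j is the number j. *)
From mathcomp Require Import all_boot.
Set Implicit Arguments. Unset Strict Implicit. Unset Printing Implicit Defensive.

Definition word := seq nat.

Definition strict_prefix (u v : word) : Prop := exists w, w <> [::] /\ v = u ++ w.

Definition dict_le (u v : word) : Prop :=
  (exists w, v = u ++ w) \/
  (exists (p : word) (a b : nat) (s t : word),
      (a < b)%N /\ u = p ++ a :: s /\ v = p ++ b :: t).

Definition dict_lt (u v : word) : Prop := dict_le u v /\ u <> v.

(* the finite set P is given by the list ps = [p_1; ...; p_l] of its
   elements in reverse dictionary order (p_1 largest) *)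
Definition rev_dict_sorted (ps : seq word) : Prop :=
  forall s, s.+1 < size ps -> dict_lt (nth [::] ps s.+1) (nth [::] ps s).

Definition spref (ps : seq word) (x : word) : Prop :=
  exists2 p, p \in ps & strict_prefix x p.

Definition cand (m n : nat) (ps : seq word) (w : word) : Prop :=
  exists (x : word) (j : nat), spref ps x /\ m <= j < n /\ w = rcons x j.

Definition is_dict_min (S : word -> Prop) (w : word) : Prop :=
  S w /\ forall v, S v -> dict_le w v.

(* L = [(p_1)'_1; ...; (p_1)'_k; (p_2)'_1; ...] is an initial segment of the
   sequence of successors (w.r.t. ps, parameters m n k): its t-th entry
   (t = (s-1) k + (r-1), 0-based) is (p_s)'_r, the dict-minimum of the
   elements x a_j of spref(P)A_{m,n} with p_s <_dict x a_j that are not among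
   the previously defined successors (the first t entries of L). *)
Definition succ_list (m n k : nat) (ps : seq word) (L : seq word) : Prop :=
  size L <= size ps * k /\
  forall t, t < size L ->
    is_dict_min
      (fun w => cand m n ps w /\ dict_lt (nth [::] ps (t %/ k)) w
                /\ ~ (w \in take t L))
      (nth [::] L t).

(* succ_at m n k ps s r w : the successor (p_{s+1})'_r (0-based position s
   in ps, 1 <= r <= k) is well defined (all successors up to it are) and
   equals w. *)
Definition succ_at (m n k : nat) (ps : seq word) (s r : nat) (w : word) : Prop :=
  exists L, succ_list m n k ps L /\ s * k + r.-1 < size L /\
            nth [::] L (s * k + r.-1) = w.

Definition prefix_code (C : word -> Prop) : Prop :=
  forall u v, C u -> C v -> (exists w, v = u ++ w) -> u = v.

Definition complete_prefix_code (m : nat) (C : word -> Prop) : Prop :=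
  (forall c, C c -> all (fun a => a < m) c) /\
  prefix_code C /\
  forall w : word, all (fun a => a < m) w ->
    exists c, C c /\ ((exists u, w = c ++ u) \/ (exists u, c = w ++ u)).

(* Main.v *)
Require Import Defs.
From mathcomp Require Import all_boot.
From mathcomp Require Import zify.
From Stdlib Require Import Classical.
Set Implicit Arguments. Unset Strict Implicit. Unset Printing Implicit Defensive.

Fixpoint lex (u v : word) : bool :=
  match u, v with
  | [::], _ => true
  | _ :: _, [::] => false
  | a :: u', b :: v' => (a < b) || ((a == b) && lex u' v')
  end.

Definition ltx u v := lex u v && (u != v).

Lemma lex_refl u : lex u u.
Proof. by elim: u => //= a u ->; rewrite eqxx orbT. Qed.

Lemma lex_anti u v : lex u v -> lex v u -> u = v.
Proof.
elim: u v => [|a u IH] [|b v] //=.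
case/orP=> [ab|/andP[/eqP -> h1]]; case/orP=> [ba|/andP[/eqP e h2]].
- lia.
- lia.
- by rewrite ltnn in ba.
- by rewrite (IH v).
Qed.

Lemma lex_trans u v w : lex u v -> lex v w -> lex u w.
Proof.
elim: u v w => [|a u IH] [|b v] [|c w] //=.
case/orP=> [ab|/andP[/eqP -> h1]]; case/orP=> [bc|/andP[/eqP e h2]].
- by rewrite (ltn_trans ab bc).
- by rewrite -e ab.
- by rewrite bc.
- by rewrite e eqxx (IH v w) // orbT.
Qed.

Lemma lex_total u v : lex u v || lex v u.
Proof.
elim: u v => [|a u IH] [|b v] //=.
case: (ltngtP a b) => //= ->; by rewrite eqxx /= IH.
Qed.

Lemma ltx_trans u v w : ltx u v -> ltx v w -> ltx u w.
Proof.
case/andP=> h1 n1 /andP[h2 n2]; rewrite /ltx (lex_trans h1 h2) /=.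
apply/eqP=> e; subst w; move/eqP: n1; apply; exact: lex_anti h1 h2.
Qed.

Lemma ltx_lex_trans u v w : ltx u v -> lex v w -> ltx u w.
Proof.
case/andP=> h1 n1 h2; rewrite /ltx (lex_trans h1 h2) /=.
apply/eqP=> e; subst w; move/eqP: n1; apply; exact: lex_anti h1 h2.
Qed.

Lemma lex_ltx_trans u v w : lex u v -> ltx v w -> ltx u w.
Proof.
move=> h1 /andP[h2 n2]; rewrite /ltx (lex_trans h1 h2) /=.
apply/eqP=> e; subst w; move/eqP: n2; apply; exact: lex_anti h2 h1.
Qed.

Lemma ltx_irr u : ltx u u = false.
Proof. by rewrite /ltx eqxx andbF. Qed.

Lemma ltx_asym u v : ltx u v -> ltx v u -> False.
Proof. move=> h1 h2; have := ltx_trans h1 h2; by rewrite ltx_irr. Qed.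

Lemma ltx_lex_false u v : ltx u v -> lex v u -> False.
Proof. move=> h1 h2; have := ltx_lex_trans h1 h2; by rewrite ltx_irr. Qed.

Lemma ltxNlex u v : ~~ lex u v -> ltx v u.
Proof.
move=> h; rewrite /ltx; have := lex_total u v; rewrite (negbTE h) /= => ->.
by apply/eqP=> e; subst; rewrite lex_refl in h.
Qed.

Lemma lex_cat u w : lex u (u ++ w).
Proof. by elim: u => //= a u ->; rewrite eqxx orbT. Qed.

Lemma lex_diff p a b s t : a < b -> lex (p ++ a :: s) (p ++ b :: t).
Proof. by move=> ab; elim: p => /= [|c p ->]; rewrite ?ab ?eqxx ?orbT. Qed.

Lemma dict_leP u v : dict_le u v <-> lex u v.
Proof.
split.
- case=> [[w ->]|[p [a [b [s [t [ab [-> ->]]]]]]]]; [exact: lex_cat|exact: lex_diff].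
- elim: u v => [|a u IH] v; first by move=> _; left; exists v.
  case: v => [|b v] //=.
  case/orP=> [ab|/andP[/eqP <- /IH]].
  + by right; exists [::], a, b, u, v.
  case=> [[w ->]|[p [a' [b' [s [t [ab [-> ->]]]]]]]].
  + by left; exists w.
  + by right; exists (a :: p), a', b', s, t.
Qed.

Lemma dict_ltP u v : dict_lt u v <-> ltx u v.
Proof.
rewrite /dict_lt /ltx dict_leP; split.
- by case=> -> /eqP.
- by case/andP=> -> /eqP.
Qed.

Lemma ltx_rcons_up x y z j :
  lex z y -> (exists w, y = x ++ w) -> all (fun a => a < j) z -> ltx z (rcons x j).
Proof.
elim: x y z => [|a x IH] y z.
- case: z => [|c z] /= _ _; first by move=> *.
  by case/andP=> cj _; rewrite /ltx /= cj /=; apply/eqP => -[e _]; lia.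
- move=> hz [w E]; subst y; move: hz => /=. case: z => [|c z] //= .
  case/orP=> [ca|/andP[/eqP -> h]] /andP[cj al].
  + by rewrite /ltx /= ca /=; apply/eqP=> -[e]; lia.
  + have := IH (x ++ w) z h (ex_intro _ w erefl) al.
    by case/andP=> h1 h2; rewrite /ltx /= eqxx h1 orbT /= eqseq_cons eqxx.
Qed.

Lemma ltx_not_prefix y x z : ltx y x -> ~ (exists w, x = y ++ w) -> ltx (y ++ z) x.
Proof.
elim: y x => [|a y IH] [|b x] //=.
- by move=> _ []; exists (b :: x).
- move=> h np; rewrite /ltx /=; move: h; rewrite /ltx /= => /andP[].
  case/orP=> [ab|/andP[/eqP eab h]] _; last subst b.
  + by rewrite ab /=; apply/eqP=> -[e]; lia.
  + have: ltx y x.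
      rewrite /ltx h /=; apply/eqP=> e; apply: np; exists [::]; by rewrite e cats0.
    move/IH => h2.
    have: ~ (exists w, x = y ++ w) by case=> w e; apply: np; exists w; rewrite e.
    move/h2 => /andP[h3 h4]; rewrite eqxx h3 orbT /= eqseq_cons eqxx; exact: h4.
Qed.

Lemma lex_between p z1 z2 v : lex (p ++ z1) v -> lex v (p ++ z2) -> exists w, v = p ++ w.
Proof.
elim: p v => [|a p IH] v; first by exists v.
case: v => [|b v] //=.
case/orP=> [ab|/andP[/eqP <- h1]] /orP[ba|/andP[/eqP e h2]].
- lia.
- subst; by rewrite ltnn in ab.
- by rewrite ltnn in ba.
- by case: (IH v h1 h2) => w ->; exists w.
Qed.

Lemma is_dict_min_uniq S w1 w2 : is_dict_min S w1 -> is_dict_min S w2 -> w1 = w2.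
Proof.
case=> h1 m1 [h2 m2]; apply: lex_anti; apply/dict_leP; [exact: m1|exact: m2].
Qed.

Lemma min_exists (S : word -> Prop) (cl : seq word) :
  (forall w, S w -> w \in cl) -> (exists w, S w) -> exists w, is_dict_min S w.
Proof.
elim: cl S => [|a cl IH] S sub [w0 Sw0].
- by have := sub _ Sw0.
- pose S' := fun w => S w /\ w <> a.
  have sub' : forall w, S' w -> w \in cl.
    move=> w [Sw nwa]; move: (sub _ Sw); rewrite inE => /orP[/eqP//|//].
  case: (classic (exists w, S' w)) => [ex|nex].
  + case: (IH S' sub' ex) => w' [[Sw' nw'] mw'].
    case: (classic (S a)) => Sa.
    * case/orP: (lex_total a w') => h.
      -- exists a; split => // v Sv; apply/dict_leP.
         case: (classic (v = a)) => [->|nva]; first exact: lex_refl.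
         apply: lex_trans h _; apply/dict_leP; exact: mw'.
      -- exists w'; split => // v Sv; case: (classic (v = a)) => [->|nva].
         ++ by apply/dict_leP.
         ++ exact: mw'.
    * exists w'; split => // v Sv; apply: mw'; split => // e; subst; exact: Sa.
  + exists a; have Sa : S a.
      case: (classic (w0 = a)) => [<-//|n]; case: nex; by exists w0.
    split => // v Sv; case: (classic (v = a)) => [->|n]; first by apply/dict_leP; exact: lex_refl.
    case: nex; by exists v.
Qed.

Lemma ltx_diff p a b s t : a < b -> ltx (p ++ a :: s) (p ++ b :: t).
Proof.
move=> ab; rewrite /ltx lex_diff //=; elim: p => /= [|c p IH].
- by rewrite eqseq_cons negb_and; apply/orP; left; apply/eqP; lia.
- by rewrite eqseq_cons eqxx.
Qed.

Section Setup.
Variables (m n k : nat) (ps : seq word).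
Hypothesis Hm : 2 <= m.
Hypothesis Hk : 0 < k.
Hypothesis Hnm : n - m = k * (m - 1).
Hypothesis Hsort : rev_dict_sorted ps.
Hypothesis Hform : forall p, p \in ps -> exists w, p = (m - 1) :: w /\ all (fun a => a < m) w.
Hypothesis Hpc : complete_prefix_code m (fun w => ((m - 1) :: w) \in ps).

Lemma PC p q : p \in ps -> q \in ps -> (exists w, q = p ++ w) -> p = q.
Proof.
move=> pin qin [w E].
case: (Hform pin) => a [Ea _]; case: (Hform qin) => b [Eb _].
case: Hpc => _ [pc _].
have : a = b.
  apply: pc; [by rewrite -Ea|by rewrite -Eb|].
  by exists w; move: E; rewrite Ea Eb /= => -[].
by rewrite Ea Eb => ->.
Qed.

Lemma letters p : p \in ps -> all (fun a => a < m) p.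
Proof. by case/Hform=> w [-> al] /=; rewrite al andbT; lia. Qed.

Lemma nth_in s : s < size ps -> nth [::] ps s \in ps.
Proof. exact: mem_nth. Qed.

Lemma sorted_nth s d : s + d.+1 < size ps ->
  ltx (nth [::] ps (s + d.+1)) (nth [::] ps s).
Proof.
elim: d => [|d IH] h.
- by rewrite addn1; apply/dict_ltP; apply: Hsort; rewrite -addn1.
- apply: ltx_trans (IH _); last lia.
  rewrite addnS; apply/dict_ltP; apply: Hsort; lia.
Qed.

Lemma sorted_lt s s' : s < s' < size ps -> ltx (nth [::] ps s') (nth [::] ps s).
Proof.
case/andP=> h1 h2; have -> : s' = s + (s' - s.+1).+1 by lia.
apply: sorted_nth; lia.
Qed.

Lemma take_of (p z v : word) : v = p ++ z -> take (size p) v = p.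
Proof. by move=> ->; rewrite take_size_cat. Qed.

Lemma cand_noext v p : cand m n ps v -> p \in ps -> ~ (exists z, v = p ++ z).
Proof.
case=> x [j [[q qin [w [wn Eq]]] [/andP[mj jn] Ev]]] pin [z Ez].
have lp := letters pin.
case: (leqP (size p) (size x)) => hs.
- have Hx : x = p ++ drop (size p) x.
    have := take_of Ez; rewrite Ev -cats1 take_cat.
    case: ifP => [_ tk|_]; first by rewrite -{1}(cat_take_drop (size p) x) tk.
    have -> : size p - size x = 0 by lia.
    by rewrite take0 cats0 => <-; rewrite drop_size cats0.
  have := PC pin qin; rewrite Eq Hx -catA => /(_ (ex_intro _ _ erefl)) E.
  have : size (p ++ drop (size p) x ++ w) = size p by rewrite -E.
  rewrite !size_cat; case: w wn {Eq E} => //= a w _; lia.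
- have e1 : size v = size p + size z by rewrite Ez size_cat.
  have e2 : size v = (size x).+1 by rewrite Ev size_rcons.
  move: Ez; have -> : z = [::] by apply: size0nil; lia.
  rewrite cats0 => Epv; move: lp; rewrite -Epv Ev all_rcons => /andP[jm _]; lia.
Qed.

Lemma decomp s : s.+1 < size ps ->
  exists c b b' u u', [/\ b < b', nth [::] ps s.+1 = c ++ b :: u,
     nth [::] ps s = c ++ b' :: u' & c <> [::]].
Proof.
move=> hs; have := Hsort hs; case=> [[[w E]|[c [b [b' [u [u' [bb [E1 E2]]]]]]]] ne].
- case: ne; apply: PC; rewrite ?nth_in //; [lia|by exists w].
- exists c, b, b', u, u'; split => // ec; subst c.
  have in1 : nth [::] ps s.+1 \in ps by rewrite nth_in.
  have in2 : nth [::] ps s \in ps by rewrite nth_in; lia.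
  case: (Hform in1) => w1 [e1 _]; case: (Hform in2) => w2 [e2 _].
  move: e1 e2; rewrite E1 E2 /= => -[e1 _] [e2 _]; lia.
Qed.


Lemma k_le : k <= n - m.
Proof. by rewrite Hnm leq_pmulr //; lia. Qed.

Lemma W_exists s : s < size ps -> exists W : seq word,
  [/\ uniq W, size W = s.+1 * k,
      (forall w, w \in W -> cand m n ps w /\ ltx (nth [::] ps s) w) &
      (forall w, w \in W -> exists c j, [/\ w = rcons c j, m <= j &
          (c = [::] \/ ltx (nth [::] ps s) (rcons c ((j - m) %/ k).+1))])].
Proof.
have kle := k_le.
elim: s => [|s IH] hs.
- have p0in : nth [::] ps 0 \in ps by rewrite nth_in.
  case: (Hform p0in) => w0 [E0 _].
  exists [seq [:: m + r] | r <- iota 0 k]; split.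
  + by rewrite map_inj_uniq ?iota_uniq // => a b [e]; lia.
  + by rewrite size_map size_iota mul1n.
  + move=> w /mapP [r]; rewrite mem_iota => /andP[_ rk] ->; split.
    * exists [::], (m + r); split; last (split; [lia|by []]).
      exists (nth [::] ps 0) => //; exists (nth [::] ps 0); split => //.
      by rewrite E0.
    * rewrite E0 /ltx /=; apply/andP; split; first by apply/orP; left; lia.
      by rewrite eqseq_cons negb_and; apply/orP; left; apply/eqP; lia.
  + move=> w /mapP [r]; rewrite mem_iota => /andP[_ rk] ->.
    by exists [::], (m + r); split => //; [lia|left].
- case: (IH (ltnW hs)) => W [uW sW cW iW].
  case: (decomp hs) => c [b [b' [u [u' [bb E1 E2 cne]]]]].
  have ps_in : nth [::] ps s \in ps by rewrite nth_in //; lia.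
  have ps1_in : nth [::] ps s.+1 \in ps by rewrite nth_in.
  have b'm : b' < m.
    by move: (letters ps_in); rewrite E2 all_cat /= => /andP[_ /andP[]].
  have lt1 : ltx (nth [::] ps s.+1) (nth [::] ps s) by apply: sorted_lt; lia.
  have divE : forall r, r < k -> (m + b'.-1 * k + r - m) %/ k = b'.-1.
    move=> r rk; have -> : m + b'.-1 * k + r - m = b'.-1 * k + r by rewrite -addnA addnC addnK.
    by rewrite divnMDl // divn_small // addn0.
  have nlt : ~ ltx (nth [::] ps s) (rcons c b').
    move=> h; apply: (ltx_lex_false h); rewrite E2 -cat1s catA cats1; exact: lex_cat.
  exists (W ++ [seq rcons c (m + b'.-1 * k + r) | r <- iota 0 k]); split.
  + rewrite cat_uniq uW /= map_inj_uniq ?iota_uniq ?andbT; last first.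
      by move=> x y /= e; have := rcons_inj e => -[]; lia.
    apply/hasPn => w /mapP [r]; rewrite mem_iota => /andP[_ rk] -> {w}.
    apply/negP => /iW [c0 [j0 [/rcons_inj [e1 e2] _ h]]].
    subst c0 j0; case: h => [//|]; rewrite divE // prednK //; lia.
  + by rewrite size_cat sW size_map size_iota mulSn addnC.
  + move=> w; rewrite mem_cat => /orP[/cW [h1 h2]|].
    * by split => //; apply: ltx_trans h2.
    * move=> /mapP [r]; rewrite mem_iota => /andP[_ rk] -> {w}; split.
      -- exists c, (m + b'.-1 * k + r); split; last split => //.
         ++ exists (nth [::] ps s) => //; exists (b' :: u'); split => //; rewrite E2.
         ++ apply/andP; split; first by rewrite -addnA leq_addr.
            have : b'.-1 * k + k <= k * (m - 1) by rewrite [k * _]mulnC addnC -mulSn leq_mul2r; apply/orP; right; lia.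
            move: (b'.-1 * k) => P; lia.
      -- apply: ltx_rcons_up (lex_refl _) _ _; first by exists (b :: u).
         apply: sub_all (letters ps1_in) => a /=; move: (b'.-1 * k) => P; lia.
  + move=> w; rewrite mem_cat => /orP[/iW [c0 [j0 [h1 h2 h3]]]|].
    * exists c0, j0; split => //; case: h3 => [->|h3]; [by left|right].
      exact: ltx_trans h3.
    * move=> /mapP [r]; rewrite mem_iota => /andP[_ rk] -> {w}.
      exists c, (m + b'.-1 * k + r); split => //; first by rewrite -addnA leq_addr.
      right; rewrite divE // prednK; last lia.
      by rewrite E1 -cats1; apply: ltx_diff.
Qed.

End Setup.

Definition candlist (n : nat) (ps : seq word) : seq word :=
  [seq rcons x j | x <- flatten [seq [seq take d p | d <- iota 0 (size p)] | p <- ps],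
                   j <- iota 0 n].

Lemma cand_in m n ps w : cand m n ps w -> w \in candlist n ps.
Proof.
case=> x [j [[p pin [z [zn Ep]]] [/andP[_ jn] ->]]].
apply: allpairs_f; last by rewrite mem_iota.
apply/flatten_mapP; exists p => //; apply/mapP; exists (size x).
- rewrite mem_iota /= Ep size_cat; case: z zn {Ep} => //= *; lia.
- by rewrite Ep take_size_cat.
Qed.

Lemma succ_list_take m n k ps L1 L2 : succ_list m n k ps L1 -> succ_list m n k ps L2 ->
  forall t, t <= size L1 -> t <= size L2 -> take t L1 = take t L2.
Proof.
case=> _ h1 [_ h2]; elim=> [|t IH] t1 t2; first by rewrite !take0.
rewrite (take_nth [::] t1) (take_nth [::] t2) IH ?(ltnW t1) ?(ltnW t2) //.
congr rcons; apply: is_dict_min_uniq (h1 t t1) _.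
by rewrite (IH (ltnW t1) (ltnW t2)); apply: h2.
Qed.

Lemma succ_list_nth m n k ps L1 L2 : succ_list m n k ps L1 -> succ_list m n k ps L2 ->
  forall t, t < size L1 -> t < size L2 -> nth [::] L1 t = nth [::] L2 t.
Proof.
move=> s1 s2 t t1 t2; have := succ_list_take s1 s2 t1 t2.
by rewrite (take_nth [::] t1) (take_nth [::] t2) => /rcons_inj [].
Qed.

Lemma succ_at_nth m n k ps L s r w : succ_list m n k ps L -> s * k + r.-1 < size L ->
  succ_at m n k ps s r w -> w = nth [::] L (s * k + r.-1).
Proof.
move=> sL hlt [L0 [sL0 [lt0 <-]]]; exact: (succ_list_nth sL0 sL lt0 hlt).
Qed.

Lemma succ_list_full m n k ps : 2 <= m -> 0 < k -> n - m = k * (m - 1) ->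
  rev_dict_sorted ps ->
  (forall p, p \in ps -> exists w, p = (m - 1) :: w /\ all (fun a => a < m) w) ->
  complete_prefix_code m (fun w => ((m - 1) :: w) \in ps) ->
  exists L, succ_list m n k ps L /\ size L = size ps * k.
Proof.
move=> Hm Hk Hnm Hsort Hform Hpc.
suff: forall t, t <= size ps * k -> exists L, succ_list m n k ps L /\ size L = t.
  by move/(_ _ (leqnn _)).
elim=> [|t IH] ht.
- by exists [::]; split => //; split => // t; rewrite ltn0.
- case: (IH (ltnW ht)) => L [[_ sL] eL].
  have hs : t %/ k < size ps by rewrite ltn_divLR.
  case: (W_exists Hm Hk Hnm Hsort Hform Hpc hs) => W [uW sW cW _].
  case: (boolP (all (fun w => w \in L) W)) => [/allP sub|/allPn [w win wnL]].
    have := uniq_leq_size uW sub; rewrite sW eL.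
    have := ltn_ceil t Hk; lia.
  pose S := fun w => cand m n ps w /\ dict_lt (nth [::] ps (t %/ k)) w
                     /\ ~ (w \in take t L).
  case: (@min_exists S (candlist n ps)).
  + by move=> v [cv _]; apply: cand_in cv.
  + exists w; case: (cW w win) => c1 c2; split => //; split; first by apply/dict_ltP.
    by rewrite -eL take_size; apply/negP.
  move=> w0 w0min; exists (rcons L w0); split; last by rewrite size_rcons eL.
  split; first by rewrite size_rcons eL.
  move=> t'; rewrite size_rcons eL ltnS leq_eqVlt => /orP[/eqP Et|lt].
  + subst t'. have tL : take t (rcons L w0) = take t L.
      by rewrite -cats1 take_cat -eL ltnn subnn take0 cats0 take_size.
    have nL : nth [::] (rcons L w0) t = w0 by rewrite nth_rcons -eL ltnn eqxx.
    by rewrite tL nL.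
  + have lt' : t' < size L by rewrite eL.
    rewrite nth_rcons lt' -cats1 take_cat lt'; exact: sL.
Qed.

Definition gtx : rel word := fun x y => ltx y x.

Lemma gtx_trans : transitive gtx.
Proof. move=> y x z h1 h2; exact: ltx_trans h2 h1. Qed.

Lemma gtx_irr : irreflexive gtx.
Proof. by move=> x; rewrite /gtx ltx_irr. Qed.

Lemma rds_sorted s : rev_dict_sorted s -> sorted gtx s.
Proof. by move=> h; apply/(sortedP [::]) => j hj; apply/dict_ltP; apply: h. Qed.

Section Split.
Variables (m n k : nat) (ps : seq word) (i0 : nat).
Hypothesis Hm : 2 <= m.
Hypothesis Hk : 0 < k.
Hypothesis Hnm : n - m = k * (m - 1).
Hypothesis Hsort : rev_dict_sorted ps.
Hypothesis Hform : forall p, p \in ps -> exists w, p = (m - 1) :: w /\ all (fun a => a < m) w.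
Hypothesis Hpc : complete_prefix_code m (fun w => ((m - 1) :: w) \in ps).
Hypothesis Hi0 : i0 < size ps.

Local Notation pi := (nth [::] ps i0).

Definition Emid := [seq rcons pi j | j <- rev (iota 0 m)].
Definition E := take i0 ps ++ Emid ++ drop i0.+1 ps.

Lemma ps_split : ps = take i0 ps ++ pi :: drop i0.+1 ps.
Proof. by rewrite -drop_nth // cat_take_drop. Qed.

Lemma pi_in : pi \in ps.
Proof. exact: mem_nth. Qed.

Lemma ps_uniq : uniq ps.
Proof. exact: sorted_uniq gtx_trans gtx_irr _ (rds_sorted Hsort). Qed.

Lemma ps_pairwise : pairwise gtx ps.
Proof. by rewrite -sorted_pairwise; [exact: rds_sorted|exact: gtx_trans]. Qed.

Lemma E_sorted : sorted gtx E.
Proof.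
rewrite sorted_pairwise; last exact: gtx_trans.
have h := ps_pairwise; rewrite {1}ps_split pairwise_cat pairwise_cons in h.
case/and3P: h => /allrelP a1 p1 /andP[/allP a2 p2].
rewrite /E !pairwise_cat p1 p2 /= !andbT; apply/and3P; split.
- apply/allrelP => x y xin; rewrite mem_cat => /orP[/mapP [j _ ->]|yin].
  + have h : gtx x pi by apply: a1 => //; rewrite inE eqxx.
    rewrite /gtx -cats1; have h2 := h; apply: ltx_not_prefix h2 _.
    move=> ex; move: h; rewrite /gtx (PC Hform Hpc pi_in (mem_take xin) ex) ltx_irr //.
  + by apply: a1 => //; rewrite inE yin orbT.
- apply/allrelP => x y /mapP [j _ ->] yin.
  rewrite /gtx; apply: ltx_lex_trans (a2 _ yin) _; rewrite -cats1; exact: lex_cat.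
- rewrite /Emid -sorted_pairwise; last exact: gtx_trans.
  apply: (@homo_sorted _ _ (rcons pi) gtn gtx) => [x y /= xy|].
  + by rewrite /gtx -!cats1; apply: ltx_diff.
  + by rewrite rev_sorted; exact: iota_ltn_sorted.
Qed.

Lemma E_mem w : w \in E <-> ((w \in ps /\ w <> pi) \/ exists j, j < m /\ w = rcons pi j).
Proof.
have := ps_uniq; rewrite {1}ps_split cat_uniq /= => /and4P[_ /norP[nt _] nd _].
rewrite /E !mem_cat; split.
- case/or3P => [wt|/mapP [j jin ->]|wd].
  + left; split; first exact: mem_take wt.
    by move=> e; subst w; rewrite wt in nt.
  + by right; exists j; split => //; move: jin; rewrite mem_rev mem_iota.
  + left; split; first exact: mem_drop wd.
    by move=> e; subst w; rewrite wd in nd.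
- case=> [[win wn]|[j [jm ->]]].
  + move: win; rewrite {1}ps_split mem_cat inE => /or3P[->//|/eqP//|->].
    by rewrite !orbT.
  + by apply/or3P; apply: Or32; apply: map_f; rewrite mem_rev mem_iota.
Qed.

Lemma E_eq ps' : (forall w, w \in ps' <->
        ((w \in ps /\ w <> pi) \/ exists j, j < m /\ w = rcons pi j)) ->
  rev_dict_sorted ps' -> ps' = E.
Proof.
move=> HP Hs'; apply: (irr_sorted_eq gtx_trans gtx_irr (rds_sorted Hs') E_sorted).
move=> w; apply/idP/idP => h; [apply/E_mem; exact/HP | apply/HP; exact/E_mem].
Qed.

Lemma size_E : size E = size ps + m - 1.
Proof.
rewrite /E !size_cat size_map size_rev size_iota size_takel ?(ltnW Hi0) // size_drop.
lia.
Qed.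

Lemma nth_E_lo s : s < i0 -> nth [::] E s = nth [::] ps s.
Proof.
move=> hs; rewrite /E nth_cat size_takel ?(ltnW Hi0) // hs nth_take //.
Qed.

Lemma nth_E_mid u : u < m -> nth [::] E (i0 + u) = rcons pi (m - 1 - u).
Proof.
move=> hu; rewrite /E nth_cat size_takel ?(ltnW Hi0) // ltnNge leq_addr /= addKn.
rewrite nth_cat /Emid size_map size_rev size_iota hu.
rewrite (nth_map 0); last by rewrite size_rev size_iota.
rewrite nth_rev ?size_iota // nth_iota; last lia.
congr rcons; lia.
Qed.

Lemma index_E j : j < m -> index (rcons pi j) E = i0 + (m - 1 - j).
Proof.
move=> hj; have -> : rcons pi j = nth [::] E (i0 + (m - 1 - j)).
  rewrite nth_E_mid; last lia. congr rcons; lia.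
apply: index_uniq; first by rewrite size_E; lia.
exact: sorted_uniq gtx_trans gtx_irr _ E_sorted.
Qed.

End Split.

Lemma lex_rcons p a b : a <= b -> lex (rcons p a) (rcons p b).
Proof.
rewrite leq_eqVlt => /orP[/eqP ->|ab]; first exact: lex_refl.
by rewrite -!cats1; case/andP: (ltx_diff p [::] [::] ab).
Qed.

Section Main.
Variables (m n k : nat) (ps : seq word) (i0 : nat).
Hypothesis Hm : 2 <= m.
Hypothesis Hk : 0 < k.
Hypothesis Hnm : n - m = k * (m - 1).
Hypothesis Hsort : rev_dict_sorted ps.
Hypothesis Hform : forall p, p \in ps -> exists w, p = (m - 1) :: w /\ all (fun a => a < m) w.
Hypothesis Hpc : complete_prefix_code m (fun w => ((m - 1) :: w) \in ps).
Hypothesis Hi0 : i0 < size ps.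

Local Notation pi := (nth [::] ps i0).
Local Notation E := (E m ps i0).

Lemma piin : pi \in ps.
Proof. exact: mem_nth. Qed.

Lemma spref_E x : spref E x <-> spref ps x \/ x = pi.
Proof.
split.
- case=> q /(E_mem _ Hsort Hi0) [[qin qn]|[j [jm ->]]] [w [wn Eq]].
  + by left; exists q => //; exists w.
  + case/lastP: w wn Eq => [//|w' a] _; rewrite -rcons_cat => /rcons_inj [Epi _].
    case/lastP: w' Epi => [|w'' b]; first by rewrite cats0 => ->; right.
    move=> Epi; left; exists pi; first exact: piin.
    by exists (rcons w'' b); split => //; case: (w'') .
- case=> [[q qin [w [wn Eq]]]|->].
  + case: (eqVneq q pi) => [eq|ne].
    * exists (rcons pi 0); first by apply/(E_mem _ Hsort Hi0); right; exists 0; split => //; lia.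
      by exists (rcons w 0); split; [case: (w)|rewrite -eq Eq rcons_cat].
    * by exists q; [apply/(E_mem _ Hsort Hi0); left; split => //; apply/eqP|exists w].
  + exists (rcons pi 0); first by apply/(E_mem _ Hsort Hi0); right; exists 0; split => //; lia.
    by exists [:: 0]; rewrite cats1.
Qed.

Lemma cand_E v : cand m n E v <->
  cand m n ps v \/ exists j, m <= j < n /\ v = rcons pi j.
Proof.
split.
- case=> x [j [/spref_E [sx|->] [jr ->]]].
  + by left; exists x, j.
  + by right; exists j.
- case=> [[x [j [sx [jr ->]]]]|[j [jr ->]]].
  + by exists x, j; split => //; apply/spref_E; left.
  + by exists pi, j; split => //; apply/spref_E; right.
Qed.

Lemma notpref v : cand m n ps v -> ~ (exists z, v = pi ++ z).
Proof. move=> cv; exact: (cand_noext Hm Hk Hnm Hform Hpc cv piin). Qed.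

Variable L : seq word.
Hypothesis sL : succ_list m n k ps L.
Hypothesis eL : size L = size ps * k.

Local Notation K := (i0 * k).
Definition Nl := [seq rcons pi (m + u) | u <- iota 0 ((m - 1) * k)].
Definition L' := take K L ++ Nl ++ take k (drop K L).

Lemma hK : K + k <= size L.
Proof. rewrite eL addnC -mulSn leq_mul2r; apply/orP; right; exact: Hi0. Qed.

Lemma size_tK : size (take K L) = K.
Proof. by rewrite size_takel //; have := hK; lia. Qed.

Lemma size_Nl : size Nl = (m - 1) * k.
Proof. by rewrite size_map size_iota. Qed.

Lemma size_tk : size (take k (drop K L)) = k.
Proof. by rewrite size_takel // size_drop; have := hK; lia. Qed.

Lemma size_L' : size L' = K + (m - 1) * k + k.
Proof. by rewrite /L' !size_cat size_tK size_Nl size_tk addnA. Qed.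

Lemma Lcand w : w \in L -> cand m n ps w.
Proof.
case/(nthP [::]) => t ht <-; by case: ((sL.2 t ht).1).
Qed.

Lemma Lmem t : t < size L -> [/\ cand m n ps (nth [::] L t),
   ltx (nth [::] ps (t %/ k)) (nth [::] L t) & ~ (nth [::] L t \in take t L)].
Proof.
move=> ht; case: (sL.2 t ht) => [[c [d n']] _]; split => //; exact/dict_ltP.
Qed.

Lemma Lmin t v : t < size L -> cand m n ps v -> ltx (nth [::] ps (t %/ k)) v ->
  ~ (v \in take t L) -> lex (nth [::] L t) v.
Proof.
move=> ht cv dv nv; case: (sL.2 t ht) => _ h; apply/dict_leP; apply: h.
by split => //; split => //; apply/dict_ltP.
Qed.

Lemma nth_L'_mid u : u < (m - 1) * k -> nth [::] L' (K + u) = rcons pi (m + u).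
Proof.
move=> hu; rewrite /L' nth_cat size_tK ltnNge leq_addr /= addKn nth_cat size_Nl hu.
by rewrite (nth_map 0) ?size_iota // nth_iota.
Qed.

Lemma nth_L'_hi r : r < k -> nth [::] L' (K + (m - 1) * k + r) = nth [::] L (K + r).
Proof.
move=> hr; rewrite /L' nth_cat size_tK ltnNge -addnA leq_addr /= addKn.
rewrite nth_cat size_Nl ltnNge leq_addr /= addKn nth_take // nth_drop //.
Qed.

Lemma L'_succ : succ_list m n k E L'.
Proof.
have hK' := hK.
have kmul : n - m = (m - 1) * k by rewrite Hnm mulnC.
split.
  rewrite size_L' (size_E Hm Hk Hnm Hi0).
  have -> : (size ps + m - 1) * k = size ps * k + (m - 1) * k.
    by rewrite -mulnDl; congr (_ * _); lia.
  have : i0 * k + k <= size ps * k by rewrite addnC -mulSn leq_mul2r Hi0 orbT.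
  lia.
move=> t ht; rewrite size_L' in ht.
case: (ltnP t K) => h1.
{
  have nA : nth [::] L' t = nth [::] L t.
    by rewrite /L' nth_cat size_tK h1 nth_take.
  have tA : take t L' = take t L.
    by rewrite /L' take_cat size_tK h1 take_takel // ltnW.
  have dA : t %/ k < i0 by rewrite ltn_divLR.
  have eA : nth [::] E (t %/ k) = nth [::] ps (t %/ k) by rewrite (nth_E_lo m Hi0).
  have htL : t < size L by lia.
  rewrite nA tA eA; case: (Lmem htL) => c1 c2 c3; split.
  - by split; [apply/cand_E; left|split => //; apply/dict_ltP].
  - move=> v [/cand_E cv [/dict_ltP dv nv]]; apply/dict_leP.
    case: cv => [cv|[j [_ Ev]]]; first exact: Lmin.
    exfalso; subst v.
    have sin : nth [::] ps (t %/ k) \in ps by apply: mem_nth; exact: ltn_trans dA Hi0.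
    have lt1 : ltx pi (nth [::] ps (t %/ k)) by apply: (sorted_lt Hm Hk Hnm Hsort); rewrite dA Hi0.
    have np : ~ (exists w, nth [::] ps (t %/ k) = pi ++ w).
      move=> ex; have := PC Hform Hpc piin sin ex => e; by rewrite e ltx_irr in lt1.
    have := ltx_not_prefix [:: j] lt1 np; rewrite cats1 => h.
    exact: ltx_asym h dv. }
case: (ltnP t (K + (m - 1) * k)) => h2.
{
  pose u := t - K.
  have tu : t = K + u by rewrite /u; lia.
  have hu : u < (m - 1) * k by rewrite /u; lia.
  have nB : nth [::] L' t = rcons pi (m + u) by rewrite tu nth_L'_mid.
  have tB : take t L' = take K L ++ [seq rcons pi (m + u') | u' <- iota 0 u].
    rewrite /L' take_cat size_tK ltnNge h1 /= -/u take_cat size_Nl hu /Nl.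
    by rewrite -map_take take_iota; congr (_ ++ map _ (iota _ _)); lia.
  have dB : t %/ k = i0 + u %/ k by rewrite tu divnMDl.
  have uk : u %/ k < m - 1 by rewrite ltn_divLR.
  have eB : nth [::] E (t %/ k) = rcons pi (m - 1 - u %/ k).
    by rewrite dB (nth_E_mid Hm Hk Hnm Hi0) //; lia.
  rewrite nB tB eB; split.
  - split; first by apply/cand_E; right; exists (m + u); split => //; lia.
    split; first by apply/dict_ltP; rewrite -!cats1; apply: ltx_diff; move: (u %/ k) => q; lia.
    rewrite mem_cat => /orP[/mem_take/Lcand/notpref|/mapP [u' u'in /rcons_inj [e]]].
    + by apply; exists [:: m + u]; rewrite cats1.
    + by move: u'in; rewrite mem_iota; lia.
  - move=> v [/cand_E cv [/dict_ltP dv nv]]; apply/dict_leP.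
    case: cv => [cv|[j [jr Ev]]].
    + case: (boolP (lex (rcons pi (m + u)) v)) => // /ltxNlex h.
      exfalso; apply: (notpref cv).
      case/andP: dv => dv _; case/andP: h => h _.
      by move: dv h; rewrite -!cats1; apply: lex_between.
    + subst v; apply: lex_rcons; case: (leqP (m + u) j) => // hj.
      exfalso; apply: nv; rewrite mem_cat; apply/orP; right.
      have -> : j = m + (j - m) by lia.
      by apply: map_f; rewrite mem_iota; lia. }
pose r := t - K - (m - 1) * k.
have tr : t = K + (m - 1) * k + r by rewrite /r; lia.
have hr : r < k by rewrite /r; lia.
pose t0 := K + r.
have ht0 : t0 < size L by rewrite /t0; lia.
have nC : nth [::] L' t = nth [::] L t0 by rewrite tr nth_L'_hi.
have tC : take t L' = take K L ++ Nl ++ take r (drop K L).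
  rewrite /L' take_cat size_tK ltnNge h1 /= take_cat size_Nl ltnNge.
  have -> : (m - 1) * k <= t - K by lia.
  by rewrite /= take_takel; [congr (_ ++ (_ ++ take _ _)); lia|lia].
have tC0 : take t0 L = take K L ++ take r (drop K L) by rewrite /t0 takeD.
have dC : t %/ k = i0 + (m - 1).
  by rewrite tr -mulnDl divnMDl // divn_small // addn0.
have d0 : t0 %/ k = i0 by rewrite /t0 divnMDl // divn_small // addn0.
have eC : nth [::] E (t %/ k) = rcons pi 0.
  by rewrite dC (nth_E_mid Hm Hk Hnm Hi0); [congr rcons|]; lia.
have memC : forall w, w \in take t L' -> w \in take t0 L \/ w \in Nl.
  move=> w; rewrite tC tC0 !mem_cat => /or3P[h|h|h]; [left|right|left]; by rewrite ?h ?orbT.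
case: (Lmem ht0); rewrite d0 => c1 c2 c3.
rewrite nC eC; split.
- split; first by apply/cand_E; left.
  split.
  + apply/dict_ltP; case: (boolP (lex (nth [::] L t0) (rcons pi 0))) => h; last exact: ltxNlex.
    exfalso; apply: (notpref c1); case/andP: c2 => c2 _.
    by apply: (@lex_between pi [::] [:: 0]); rewrite ?cats0 ?cats1.
  + move/memC => [//|/mapP [u _ Eu]]; apply: (notpref c1); exists [:: m + u].
    by rewrite Eu cats1.
- move=> v [/cand_E cv [/dict_ltP dv nv]]; apply/dict_leP.
  case: cv => [cv|[j [jr Ev]]].
  + rewrite -d0 in c2; apply: Lmin => //.
    * rewrite d0; apply: lex_ltx_trans dv; rewrite -cats1; exact: lex_cat.
    * by rewrite tC0 mem_cat => /orP[h|h]; apply: nv; rewrite tC !mem_cat h ?orbT.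
  + exfalso; subst v; apply: nv; rewrite tC !mem_cat; apply/orP; right; apply/orP; left.
    have -> : j = m + (j - m) by lia.
    by apply: map_f; rewrite mem_iota; lia.
Qed.

End Main.

Theorem mainTheorem5 (m n k l : nat) (ps : seq word) (i : nat) :
  2 <= m -> m <= n -> n - m = k * (m - 1) ->
  0 < l -> l = m %[mod m - 1] ->
  size ps = l -> rev_dict_sorted ps ->
  (forall p, p \in ps -> exists w, p = (m - 1) :: w /\ all (fun a => a < m) w) ->
  complete_prefix_code m (fun w => ((m - 1) :: w) \in ps) ->
  1 <= i <= l ->
  let p_i := nth [::] ps i.-1 in
  (* the successors (p_i)'_1, ..., (p_i)'_k w.r.t. P are well defined *)
  (forall r, 1 <= r <= k -> exists w, succ_at m n k ps i.-1 r w) /\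
  (* for any listing ps' of P~ = (P \ {p_i}) u {p_i a_0, ..., p_i a_{m-1}}
     in reverse dictionary order: *)
  (forall ps' : seq word,
     (forall w, w \in ps' <->
        ((w \in ps /\ w <> p_i) \/ exists j, j < m /\ w = rcons p_i j)) ->
     rev_dict_sorted ps' ->
     (forall j r, 1 <= j <= m - 1 -> 1 <= r <= k ->
        succ_at m n k ps' (index (rcons p_i j) ps') r
                (rcons p_i (m + (m - 1 - j) * k + r - 1))) /\
     (forall r w, 1 <= r <= k -> succ_at m n k ps i.-1 r w ->
        succ_at m n k ps' (index (rcons p_i 0) ps') r w)).
Proof.
move=> Hm Hmn Hnm Hl Hmod Hsz Hs Hf Hc /andP[i1 il] p_i.
case: (posnP k) => [k0|Hk].
  subst k; split; first by move=> r /andP[r1 rk]; lia.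
  by move=> ps' _ _; split => [j r _ /andP[r1 rk]|r w /andP[r1 rk]]; lia.
have Hi0 : i.-1 < size ps by lia.
case: (succ_list_full Hm Hk Hnm Hs Hf Hc) => L [sL eL].
have bnd : i.-1 * k + k <= size ps * k by rewrite addnC -mulSn leq_mul2r prednK ?il ?orbT //; lia.
split.
  move=> r /andP[r1 rk]; exists (nth [::] L (i.-1 * k + r.-1)); exists L; split => //; split => //.
  rewrite eL; move: bnd; move: (i.-1 * k) (size ps * k) => a b; lia.
move=> ps' HP Hs'.
have Eq := E_eq Hs Hf Hc Hi0 HP Hs'.
rewrite Eq.
have sL' := L'_succ Hm Hk Hnm Hs Hf Hc Hi0 sL eL.
have sz' := size_L' Hm Hk Hnm Hi0 eL.
split.
- move=> j r /andP[j1 jm] /andP[r1 rk].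
  rewrite /p_i (index_E Hm Hk Hnm Hs Hf Hc Hi0); last lia.
  have hu : (m - 1 - j) * k + r.-1 < (m - 1) * k.
    have : (m - 1 - j) * k + k <= (m - 1) * k.
      by rewrite addnC -mulSn leq_mul2r; apply/orP; right; lia.
    move: ((m - 1 - j) * k) ((m - 1) * k) => a b; lia.
  exists (L' m k ps i.-1 L); split => //; split.
  + rewrite sz' mulnDl -addnA; move: hu; move: ((m - 1 - j) * k) ((m - 1) * k) => a b; lia.
  + rewrite mulnDl -addnA (nth_L'_mid Hm Hk Hnm Hi0 eL hu); congr rcons.
    move: ((m - 1 - j) * k) => a; lia.
- move=> r w /andP[r1 rk] Hsa.
  rewrite (succ_at_nth sL _ Hsa); last first.
    rewrite eL; move: bnd; move: (i.-1 * k) (size ps * k) => a b; lia.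
  rewrite /p_i (index_E Hm Hk Hnm Hs Hf Hc Hi0 (j:=0)); last lia.
  rewrite subn0; exists (L' m k ps i.-1 L); split => //; split.
  + rewrite sz' mulnDl; move: (i.-1 * k) ((m - 1) * k) => a b; lia.
  + rewrite mulnDl (nth_L'_hi Hm Hk Hnm Hi0 eL) //; lia.
Qed.
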